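(* Consider the fractionation problem with $N\ge 1$ fractions: minimize $Y_{N-1}^+$ over doses $d_0,\dots,d_{N-1}\ge 0$ subject to $\sum_{k=0}^{N-1}\mathrm{BED}_O(d_k)\le c$. Assume that $\phi(x)>0$ for all $x>0$. Then every optimal dose sequence satisfies the constraint with equality, i.e. $\sum_{k=0}^{N-1}\mathrm{BED}_O(d_k^* )=c$.
   Context: Model: Tumor parameters $\alpha_T>0$, $\beta_T>0$, $[\alpha/\beta]_T=\alpha_T/\beta_T$; organ-at-risk (OAR) parameter $[\alpha/\beta]_O>0$; sparing factor $0<\gamma<1$; OAR limit $c>0$. Define $\mathrm{BED}_T(d)=d\left(1+\frac{d}{[\alpha/\beta]_T}\right)$ and $\mathrm{BED}_O(d)=\gamma d\left(1+\frac{\gamma d}{[\alpha/\beta]_O}\right)$ for $d\ge0$. Tumor growth between doses follows $\frac{1}{x}\frac{dx}{dt}=\phi(x)$, where $\phi:(0,\infty)\to\mathbb{R}$ is continuous and non-increasing (standing assumption). Doses $d_0,\dots,d_{N-1}$ are delivered at times $0,1,\dots,N-1$ (days). Writing $Y=\ln(\text{number of tumor cells})/\alpha_T$, let $F$ be the map sending the value of $Y$ at time $t$ to its value at time $t+1$ under the growth ODE (no dose). With initial cell number $X_0>0$ and $Y_0^-=\ln(X_0)/\alpha_T$, the state evolves by $Y_0^+=Y_0^- -\mathrm{BED}_T(d_0)$, $Y_{i+1}^-=F(Y_i^+)$, $Y_{i+1}^+=Y_{i+1}^- - \mathrm{BED}_T(d_{i+1})$ for $i=0,\dots,N-2$. 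*)

(* Defs.v *)
From Stdlib Require Import Reals Lra.
Open Scope R_scope.

Definition BED_T (alphaT betaT d : R) : R := d * (1 + d / (alphaT / betaT)).

Definition BED_O (abO gamma d : R) : R := gamma * d * (1 + gamma * d / abO).

Fixpoint sum_upto (f : nat -> R) (n : nat) : R :=
  match n with
  | O => 0
  | S m => sum_upto f m + f m
  end.

Definition total_BED_O (abO gamma : R) (N : nat) (d : nat -> R) : R :=
  sum_upto (fun k => BED_O abO gamma (d k)) N.

(* Y_i^+ : state just after the i-th dose.
   Y_0^+ = Y0 - BED_T(d_0);  Y_{i+1}^+ = F (Y_i^+) - BED_T(d_{i+1}). *)
Fixpoint Yplus (alphaT betaT : R) (F : R -> R) (Y0 : R) (d : nat -> R) (i : nat) : R :=
  match i with
  | O => Y0 - BED_T alphaT betaT (d O)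
  | S j => F (Yplus alphaT betaT F Y0 d j) - BED_T alphaT betaT (d (S j))
  end.

(* Standing assumption on the growth rate phi : (0,oo) -> R (modelled as a
   function on R of which only the values on (0,oo) matter):
   continuous on (0,oo) and non-increasing on (0,oo). *)
Definition phi_continuous_pos (phi : R -> R) : Prop :=
  forall x, 0 < x -> forall eps, 0 < eps -> exists delta, 0 < delta /\
    forall y, 0 < y -> Rabs (y - x) < delta -> Rabs (phi y - phi x) < eps.

Definition phi_nonincreasing_pos (phi : R -> R) : Prop :=
  forall x y, 0 < x -> x <= y -> phi y <= phi x.

(* F is the one-day flow map of (1/x) dx/dt = phi(x) in the variable
   Y = ln(x)/alphaT: for every Y, F Y = ln(x(1))/alphaT where x is a positive
   solution on [0,1] of x' = x phi(x) with x(0) = exp(alphaT Y)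
   (continuous on [0,1], differentiable on (0,1)). *)
Definition is_flow_map (alphaT : R) (phi : R -> R) (F : R -> R) : Prop :=
  forall Y, exists x : R -> R,
    x 0 = exp (alphaT * Y) /\
    (forall t, 0 <= t <= 1 -> 0 < x t) /\
    (forall t, 0 <= t <= 1 -> continuity_pt x t) /\
    (forall t, 0 < t < 1 -> derivable_pt_lim x t (x t * phi (x t))) /\
    F Y = ln (x 1) / alphaT.

(* Feasible dose sequence d_0..d_{N-1} (values of d at indices >= N are irrelevant). *)
Definition feasible (abO gamma c : R) (N : nat) (d : nat -> R) : Prop :=
  (forall k, (k < N)%nat -> 0 <= d k) /\ total_BED_O abO gamma N d <= c.

Definition objective (alphaT betaT X0 : R) (F : R -> R) (N : nat) (d : nat -> R) : R :=
  Yplus alphaT betaT F (ln X0 / alphaT) d (N - 1).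

Definition optimal (alphaT betaT abO gamma c X0 : R) (F : R -> R) (N : nat)
    (d : nat -> R) : Prop :=
  feasible abO gamma c N d /\
  forall d', feasible abO gamma c N d' ->
    objective alphaT betaT X0 F N d <= objective alphaT betaT X0 F N d'.

(* Main.v *)
Require Import Defs.
From Stdlib Require Import Reals Lra Lia Arith.
Open Scope R_scope.

Lemma sum_upto_ext (f g : nat -> R) n :
  (forall k, (k < n)%nat -> f k = g k) -> sum_upto f n = sum_upto g n.
Proof.
  induction n; intros H; simpl; auto.
  rewrite IHn by (intros; apply H; lia). rewrite H by lia. reflexivity.
Qed.

Lemma Yplus_ext aT bT F Y0 d d' j :
  (forall k, (k <= j)%nat -> d' k = d k) -> Yplus aT bT F Y0 d' j = Yplus aT bT F Y0 d j.
Proof.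
  induction j; intros H; simpl.
  - rewrite H by lia. reflexivity.
  - rewrite IHj by (intros; apply H; lia). rewrite H by lia. reflexivity.
Qed.

Lemma Yplus_last aT bT F Y0 d d' m :
  (forall k, (k < m)%nat -> d' k = d k) ->
  Yplus aT bT F Y0 d' m = Yplus aT bT F Y0 d m - BED_T aT bT (d' m) + BED_T aT bT (d m).
Proof.
  destruct m; intros H; simpl.
  - ring.
  - rewrite (Yplus_ext aT bT F Y0 d d' m) by (intros; apply H; lia). ring.
Qed.

Theorem lemma1 (alphaT betaT abO gamma c X0 : R) (phi F : R -> R) (N : nat)
  (HaT : 0 < alphaT) (HbT : 0 < betaT) (HabO : 0 < abO)
  (Hg0 : 0 < gamma) (Hg1 : gamma < 1) (Hc : 0 < c) (HX0 : 0 < X0)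
  (Hphic : phi_continuous_pos phi) (Hphim : phi_nonincreasing_pos phi)
  (HF : is_flow_map alphaT phi F)
  (HN : (1 <= N)%nat)
  (Hpos : forall x, 0 < x -> 0 < phi x) :
  forall d : nat -> R, optimal alphaT betaT abO gamma c X0 F N d ->
    total_BED_O abO gamma N d = c.
Proof.
  intros d [[Hnn Htot] Hopt].
  destruct N as [|m]; [lia|].
  destruct (Rle_lt_or_eq_dec _ _ Htot) as [Hlt|Heq]; [|exact Heq].
  exfalso.
  set (s := c - total_BED_O abO gamma (S m) d).
  set (x := d m).
  assert (Hx : 0 <= x) by (apply Hnn; lia).
  set (K := gamma + gamma * gamma * (2 * x + 1) / abO).
  assert (HK : 0 < K).
  { unfold K. assert (0 <= gamma * gamma * (2 * x + 1) / abO).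
    { unfold Rdiv. apply Rmult_le_pos; [|left; apply Rinv_0_lt_compat; lra].
      apply Rmult_le_pos; nra. }
    lra. }
  assert (Hs : 0 < s) by (unfold s; lra).
  set (e := s / (K + s)).
  assert (He0 : 0 < e) by (unfold e; apply Rdiv_lt_0_compat; lra).
  assert (He1 : e < 1).
  { unfold e. apply (Rmult_lt_reg_r (K + s)); [lra|].
    unfold Rdiv. rewrite Rmult_assoc, Rinv_l by lra. lra. }
  assert (HeK : e * K < s).
  { unfold e. unfold Rdiv. replace (s * / (K + s) * K) with (s * (K / (K + s))) by (unfold Rdiv; ring).
    assert (K / (K + s) < 1).
    { apply (Rmult_lt_reg_r (K + s)); [lra|].
      unfold Rdiv. rewrite Rmult_assoc, Rinv_l by lra. lra. }
    nra. }
  set (d' := fun k => if Nat.eqb k m then d k + e else d k).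
  assert (Hagree : forall k, (k < m)%nat -> d' k = d k).
  { intros k Hk. unfold d'. destruct (Nat.eqb_spec k m); [lia|reflexivity]. }
  assert (Hdm : d' m = x + e) by (unfold d'; rewrite Nat.eqb_refl; reflexivity).
  assert (Hfeas : feasible abO gamma c (S m) d').
  { split.
    - intros k Hk. unfold d'. destruct (Nat.eqb_spec k m).
      + subst. unfold x in Hx. lra.
      + apply Hnn; lia.
    - unfold s in HeK. unfold total_BED_O in *. simpl in *.
      rewrite (sum_upto_ext _ (fun k => BED_O abO gamma (d k)) m)
        by (intros; simpl; rewrite Hagree; auto).
      rewrite Hdm. fold x in HeK.
      unfold BED_O in *.
      assert (Hdiff : gamma * (x + e) * (1 + gamma * (x + e) / abO)
                      - gamma * x * (1 + gamma * x / abO)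
                      = e * (gamma + gamma * gamma * (2 * x + e) / abO))
        by (field; lra).
      assert (gamma * gamma * (2 * x + e) / abO <= gamma * gamma * (2 * x + 1) / abO).
      { unfold Rdiv. apply Rmult_le_compat_r; [left; apply Rinv_0_lt_compat; lra|].
        apply Rmult_le_compat_l; nra. }
      assert (e * (gamma + gamma * gamma * (2 * x + e) / abO) <= e * K)
        by (unfold K; apply Rmult_le_compat_l; lra).
      lra. }
  specialize (Hopt d' Hfeas).
  unfold objective in Hopt. replace (S m - 1)%nat with m in Hopt by lia.
  rewrite (Yplus_last _ _ _ _ d d' m Hagree) in Hopt.
  rewrite Hdm in Hopt. fold x in Hopt.
  unfold BED_T in Hopt.
  assert (Hr : 0 < alphaT / betaT) by (apply Rdiv_lt_0_compat; lra).
  assert (Hinc : (x + e) * (1 + (x + e) / (alphaT / betaT)) - x * (1 + x / (alphaT / betaT))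
                 = e * (1 + (2 * x + e) / (alphaT / betaT))) by (field; lra).
  assert (0 < (2 * x + e) / (alphaT / betaT)) by (apply Rdiv_lt_0_compat; lra).
  nra.
Qed.
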